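(* For every rule $\mathcal{R}$ and every starting vertex, the greedy random walk on the complete graph $K_n=(V,E)$ satisfies \[ \mathbb{E}[C_E(K_n)] \le |E| + (1+o(1))\, n\log n, \] where $o(1)\to0$ as $n\to\infty$ uniformly in the rule and the starting vertex. (Indeed, the overhead is at most $\sum_{i=1}^{n-1}\frac{n-1}{n-i}$.)
   Context: A greedy random walk (GRW) on a connected locally finite graph $G=(V,E)$ with rule $\mathcal{R}$ started at $v_0$: $X_0=v_0$; with $H_t=\{\{X_{s-1},X_s\}:0<s\le t\}$ (edges traversed up to time $t$) and $J_t(v)=\{e\in E: v\in e, e\notin H_t\}$, if $J_t(X_t)\ne\emptyset$ then $X_{t+1}=w$ for some $w$ with $\{X_t,w\}\in J_t(X_t)$, chosen according to an arbitrary (possibly randomized, history-dependent) rule $\mathcal{R}$; if $J_t(X_t)=\emptyset$ then $X_{t+1}$ is a uniformly random neighbor of $X_t$. For finite $G$, the edge cover time is $C_E(G)=\min\{t:H_t=E\}$. $\log$ is the natural logarithm. *)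

(* Defs.v *)
From Stdlib Require Import Reals List Arith Bool.
Import ListNotations.
Open Scope R_scope.

(* The complete graph K_n has vertex set {0,...,n-1} and edge set all
   unordered pairs {u,v} with u <> v.  A walk history is the list
   [X_0; X_1; ...; X_t] of visited vertices. *)

Definition edge_eqb (a b c d : nat) : bool :=
  ((a =? c) && (b =? d)) || ((a =? d) && (b =? c)).

Fixpoint traversed (h : list nat) (u v : nat) : bool :=
  match h with
  | x :: ((y :: _) as t) => edge_eqb x y u v || traversed t u v
  | _ => false
  end.

Definition last_vertex (h : list nat) : nat := last h 0%nat.

Definition unused_nbr (n : nat) (h : list nat) (w : nat) : bool :=
  let v := last_vertex h in
  (v <? n)%nat && (w <? n)%nat && negb (v =? w)%nat && negb (traversed h v w).

Definition has_unused (n : nat) (h : list nat) : bool :=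
  existsb (unused_nbr n h) (seq 0 n).

(* A (randomized, history-dependent) greedy rule: given the history, a
   probability distribution on the endpoints of unused edges at X_t. *)
Definition valid_rule (n : nat) (rule : list nat -> nat -> R) : Prop :=
  forall h, has_unused n h = true ->
    (forall w, unused_nbr n h w = true -> 0 <= rule h w) /\
    fold_right Rplus 0
      (map (fun w => if unused_nbr n h w then rule h w else 0) (seq 0 n)) = 1.

Definition step_prob (n : nat) (rule : list nat -> nat -> R)
    (h : list nat) (w : nat) : R :=
  if has_unused n h then (if unused_nbr n h w then rule h w else 0)
  else (if ((w <? n) && negb (last_vertex h =? w))%nat
        then / INR (n - 1) else 0).

Fixpoint prob_from (n : nat) (rule : list nat -> nat -> R)
    (pre : list nat) (rest : list nat) : R :=
  match rest with
  | [] => 1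
  | w :: rest' => step_prob n rule pre w * prob_from n rule (pre ++ [w]) rest'
  end.

Fixpoint seqs (n t : nat) : list (list nat) :=
  match t with
  | O => [[]]
  | S t' => flat_map (fun w => map (cons w) (seqs n t')) (seq 0 n)
  end.

Definition all_covered (n : nat) (h : list nat) : bool :=
  forallb (fun u => forallb (fun v => implb (u <? v)%nat (traversed h u v))
                            (seq 0 n)) (seq 0 n).

Definition prob_cover_gt (n : nat) (rule : list nat -> nat -> R) (v0 t : nat) : R :=
  fold_right Rplus 0
    (map (fun s => prob_from n rule [v0] s *
                   (if all_covered n (v0 :: s) then 0 else 1))
         (seqs n t)).

(* partial sums sum_{t<T} P(C_E > t); E[C_E] = sup_T of these (tail-sum
   formula for a [0,infinity]-valued random variable). *)
Fixpoint cover_tail_partial (n : nat) (rule : list nat -> nat -> R) (v0 T : nat) : R :=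
  match T with
  | O => 0
  | S T' => cover_tail_partial n rule v0 T' + prob_cover_gt n rule v0 T'
  end.

Definition num_edges (n : nat) : R := INR n * INR (n - 1) / 2.

(* Main.v *)
Require Import Defs.
From Stdlib Require Import Reals List Arith Lia Lra Bool FunctionalExtensionality ZArith.
Import ListNotations.
Open Scope R_scope.

Definition sumR {A} (l : list A) (f : A -> R) : R := fold_right Rplus 0 (map f l).

Lemma sumR_app {A} (l1 l2 : list A) f : sumR (l1 ++ l2) f = sumR l1 f + sumR l2 f.
Proof. induction l1; simpl; unfold sumR in *; simpl; [lra|rewrite IHl1; lra]. Qed.

Lemma sumR_cons {A} (a : A) l f : sumR (a :: l) f = f a + sumR l f.
Proof. reflexivity. Qed.

Lemma sumR_nil {A} (f : A -> R) : sumR [] f = 0.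
Proof. reflexivity. Qed.

Lemma sumR_plus {A} (l : list A) f g :
  sumR l (fun x => f x + g x) = sumR l f + sumR l g.
Proof. induction l; rewrite ?sumR_cons, ?sumR_nil; [lra|rewrite IHl; lra]. Qed.

Lemma sumR_scal {A} (l : list A) c f :
  sumR l (fun x => c * f x) = c * sumR l f.
Proof. induction l; rewrite ?sumR_cons, ?sumR_nil; [lra|rewrite IHl; lra]. Qed.

Lemma sumR_le {A} (l : list A) f g :
  (forall x, In x l -> f x <= g x) -> sumR l f <= sumR l g.
Proof.
  induction l; intros H; rewrite ?sumR_cons, ?sumR_nil; [lra|].
  assert (f a <= g a) by (apply H; left; auto).
  assert (sumR l f <= sumR l g) by (apply IHl; intros; apply H; right; auto). lra.
Qed.

Lemma sumR_ext {A} (l : list A) f g :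
  (forall x, In x l -> f x = g x) -> sumR l f = sumR l g.
Proof.
  induction l; intros H; rewrite ?sumR_cons, ?sumR_nil; [lra|].
  rewrite H by (left; auto). rewrite IHl; auto. intros; apply H; right; auto.
Qed.

Lemma sumR_map {A B} (l : list A) (g : A -> B) f :
  sumR (map g l) f = sumR l (fun x => f (g x)).
Proof. induction l; rewrite ?sumR_cons, ?sumR_nil; simpl; auto. unfold sumR in *; simpl; rewrite IHl; auto. Qed.

Lemma sumR_flat_map {A B} (l : list A) (g : A -> list B) f :
  sumR (flat_map g l) f = sumR l (fun x => sumR (g x) f).
Proof. induction l; simpl; auto. rewrite sumR_app, IHl. reflexivity. Qed.

Definition cnt {A} (l : list A) (p : A -> bool) : nat := length (filter p l).

Lemma INR_cnt {A} (l : list A) p :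
  INR (cnt l p) = sumR l (fun x => if p x then 1 else 0).
Proof.
  unfold cnt; induction l; simpl; auto.
  rewrite sumR_cons. destruct (p a); simpl length; rewrite ?S_INR, IHl; lra.
Qed.

Lemma cnt_le {A} (l : list A) p q :
  (forall x, In x l -> p x = true -> q x = true) -> (cnt l p <= cnt l q)%nat.
Proof.
  unfold cnt; induction l; simpl; intros H; auto.
  assert (IH := IHl (fun x Hx => H x (or_intror Hx))).
  destruct (p a) eqn:E.
  - rewrite (H a (or_introl eq_refl) E). simpl. lia.
  - destruct (q a); simpl; lia.
Qed.

Lemma cnt_lt {A} (l : list A) p q x :
  (forall x, In x l -> p x = true -> q x = true) ->
  In x l -> p x = false -> q x = true -> (cnt l p < cnt l q)%nat.
Proof.
  unfold cnt; induction l; simpl; intros H Hx Hp Hq; [contradiction|].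
  destruct Hx as [<-|Hx].
  - rewrite Hp, Hq. simpl.
    pose proof (cnt_le l p q (fun y Hy => H y (or_intror Hy))). unfold cnt in H0. lia.
  - assert (IH := IHl (fun y Hy => H y (or_intror Hy)) Hx Hp Hq).
    destruct (p a) eqn:E.
    + rewrite (H a (or_introl eq_refl) E). simpl. lia.
    + destruct (q a); simpl; lia.
Qed.

Lemma cnt_pos {A} (l : list A) p x : In x l -> p x = true -> (0 < cnt l p)%nat.
Proof.
  intros Hx Hp. pose proof (cnt_lt l (fun _ => false) p x) as H.
  assert (E : cnt l (fun _ => false) = 0%nat) by (clear; unfold cnt; induction l; simpl; auto).
  rewrite E in H. apply H; auto; discriminate.
Qed.

Lemma cnt_le_length {A} (l : list A) p : (cnt l p <= length l)%nat.
Proof. unfold cnt; induction l; simpl; auto. destruct (p a); simpl; lia. Qed.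

Lemma cnt_eqb_nodup (l : list nat) v : NoDup l -> In v l -> cnt l (Nat.eqb v) = 1%nat.
Proof.
  unfold cnt; induction l; simpl; intros Hn Hi; [contradiction|].
  inversion Hn; subst.
  destruct Hi as [Heq|Hi].
  - subst a. rewrite Nat.eqb_refl. simpl. f_equal.
    assert (forall l', ~ In v l' -> length (filter (Nat.eqb v) l') = 0%nat).
    { induction l'; simpl; intros; auto. destruct (Nat.eqb_spec v a); subst.
      exfalso; auto. apply IHl'; auto. }
    auto.
  - destruct (Nat.eqb_spec v a); subst; [contradiction|]. auto.
Qed.

Definition sumN {A} (l : list A) (f : A -> nat) : nat := fold_right plus 0%nat (map f l).

Lemma sumN_le {A} (l : list A) f g :
  (forall x, In x l -> (f x <= g x)%nat) -> (sumN l f <= sumN l g)%nat.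
Proof.
  unfold sumN; induction l; simpl; intros H; auto.
  specialize (H a (or_introl eq_refl)) as Ha.
  assert (IH := IHl (fun y Hy => H y (or_intror Hy))). lia.
Qed.

Lemma sumN_lt {A} (l : list A) f g x :
  (forall x, In x l -> (f x <= g x)%nat) -> In x l -> (f x < g x)%nat ->
  (sumN l f < sumN l g)%nat.
Proof.
  unfold sumN; induction l; simpl; intros H Hx Hlt; [contradiction|].
  specialize (H a (or_introl eq_refl)) as Ha.
  destruct Hx as [<-|Hx].
  - pose proof (sumN_le l f g (fun y Hy => H y (or_intror Hy))). unfold sumN in H0. lia.
  - assert (IH := IHl (fun y Hy => H y (or_intror Hy)) Hx Hlt). lia.
Qed.

Lemma sumN_pos_ex {A} (l : list A) f :
  (0 < sumN l f)%nat -> exists x, In x l /\ (0 < f x)%nat.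
Proof.
  unfold sumN; induction l; simpl; intros H; [lia|].
  destruct (f a) eqn:E.
  - destruct (IHl H) as [x [? ?]]. eauto.
  - exists a; split; auto; lia.
Qed.
Lemma edge_eqb_sym a b c d : edge_eqb a b c d = edge_eqb a b d c.
Proof. unfold edge_eqb. destruct (a =? c), (b =? d), (a =? d), (b =? c); reflexivity. Qed.

Lemma trav_sym h u v : traversed h u v = traversed h v u.
Proof.
  induction h as [|x t IH]; simpl; auto.
  destruct t as [|y t']; auto. rewrite IH, edge_eqb_sym. reflexivity.
Qed.

Lemma trav_app h w u v : h <> [] ->
  traversed (h ++ [w]) u v = traversed h u v || edge_eqb (last h 0%nat) w u v.
Proof.
  induction h as [|x t IH]; intros Hne; [congruence|].
  destruct t as [|y t'].
  - simpl. destruct (edge_eqb x w u v); reflexivity.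
  - change ((x :: y :: t') ++ [w]) with (x :: ((y :: t') ++ [w])).
    change (last (x :: y :: t') 0%nat) with (last (y :: t') 0%nat).
    assert (E : traversed (x :: ((y :: t') ++ [w])) u v =
             edge_eqb x y u v || traversed ((y :: t') ++ [w]) u v) by reflexivity.
    rewrite E, IH by discriminate.
    change (traversed (x :: y :: t') u v) with (edge_eqb x y u v || traversed (y :: t') u v).
    rewrite orb_assoc. reflexivity.
Qed.

Lemma edge_eqb_true a b c d : edge_eqb a b c d = true -> (c = a /\ d = b) \/ (c = b /\ d = a).
Proof.
  unfold edge_eqb. intros H. apply orb_true_iff in H.
  destruct H as [H|H]; apply andb_true_iff in H; destruct H as [H1 H2];
  apply Nat.eqb_eq in H1; apply Nat.eqb_eq in H2; subst; auto.
Qed.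

Lemma edge_eqb_refl a b : edge_eqb a b a b = true.
Proof. unfold edge_eqb. rewrite !Nat.eqb_refl. reflexivity. Qed.

Definition unsat (n : nat) (tr : nat -> nat -> bool) (x : nat) : bool :=
  existsb (fun y => negb (x =? y) && negb (tr x y)) (seq 0 n).
Definition kk n tr : nat := cnt (seq 0 n) (unsat n tr).
Definition UU n (tr : nat -> nat -> bool) : nat :=
  sumN (seq 0 n) (fun u => cnt (seq 0 n) (fun v => (u <? v) && negb (tr u v))).
Fixpoint Hs (m : nat) : R := match m with O => 0 | S k => Hs k + / INR (S k) end.
Definition Fp n tr v : R :=
  INR (UU n tr) + INR (n - 1) * Hs (kk n tr)
  - (if unsat n tr v then INR (n - 1) / INR (kk n tr) else 0).

Lemma Hs_nonneg m : 0 <= Hs m.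
Proof.
  induction m; [simpl; lra|]. change (Hs (S m)) with (Hs m + / INR (S m)). pose proof (pos_INR m).
  assert (0 < / INR (S m)) by (apply Rinv_0_lt_compat; rewrite S_INR; lra). lra.
Qed.

Lemma Hs_mono m m' : (m <= m')%nat -> Hs m <= Hs m'.
Proof.
  induction 1; [lra|]. change (Hs (S m0)) with (Hs m0 + / INR (S m0)).
  assert (0 < / INR (S m0)) by (apply Rinv_0_lt_compat; rewrite S_INR; pose proof (pos_INR m0); lra). lra.
Qed.

Lemma unsat_true n tr x y : (y < n)%nat -> x <> y -> tr x y = false -> unsat n tr x = true.
Proof.
  intros Hy Hxy Ht. unfold unsat. apply existsb_exists. exists y. split.
  - apply in_seq; lia.
  - rewrite Ht. apply Nat.eqb_neq in Hxy. rewrite Hxy. reflexivity.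
Qed.

Lemma unsat_mono n (tr tr' : nat -> nat -> bool) x :
  (forall a b, tr a b = true -> tr' a b = true) -> unsat n tr' x = true -> unsat n tr x = true.
Proof.
  unfold unsat. intros H H'. apply existsb_exists in H'. destruct H' as [y [Hy Hp]].
  apply existsb_exists. exists y. split; auto.
  destruct (tr x y) eqn:E.
  - rewrite (H _ _ E) in Hp. rewrite andb_false_r in Hp. discriminate.
  - apply andb_prop in Hp. destruct Hp as [Hp _]. rewrite Hp. reflexivity.
Qed.

Lemma Fp_unsat n tr v : unsat n tr v = true -> (v < n)%nat ->
  exists K0, kk n tr = S K0 /\ Fp n tr v = INR (UU n tr) + INR (n - 1) * Hs K0.
Proof.
  intros Hu Hn. unfold Fp. rewrite Hu.
  assert (Hk : (0 < kk n tr)%nat).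
  { unfold kk. apply (cnt_pos _ _ v); auto. apply in_seq. lia. }
  destruct (kk n tr) as [|K0] eqn:E; [lia|]. exists K0. split; auto.
  change (Hs (S K0)) with (Hs K0 + / INR (S K0)).
  unfold Rdiv. ring.
Qed.

Lemma greedy_step n (tr tr' : nat -> nat -> bool) v w :
  (forall a b, tr a b = true -> tr' a b = true) ->
  (forall a b, tr a b = tr b a) -> (forall a b, tr' a b = tr' b a) ->
  (v < n)%nat -> (w < n)%nat -> v <> w -> tr v w = false -> tr' v w = true ->
  unsat n tr v = true ->
  Fp n tr' w + 1 <= Fp n tr v.
Proof.
  intros Hm Hs1 Hs2 Hv Hw Hvw Ht Ht' Hu.
  assert (HU : (UU n tr' < UU n tr)%nat).
  { unfold UU.
    assert (Hle : forall u, In u (seq 0 n) ->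
      (forall x, In x (seq 0 n) -> (u <? x) && negb (tr' u x) = true -> (u <? x) && negb (tr u x) = true)).
    { intros u _ x _ H. destruct (tr u x) eqn:E.
      - rewrite (Hm _ _ E) in H. rewrite andb_false_r in H. discriminate.
      - apply andb_prop in H. destruct H as [H _]. rewrite H. reflexivity. }
    assert (Hmin : exists a b, (a < b)%nat /\ (b < n)%nat /\ (a < n)%nat /\ tr a b = false /\ tr' a b = true).
    { destruct (Nat.lt_ge_cases v w).
      - exists v, w. repeat split; auto; lia.
      - exists w, v. rewrite Hs1, Hs2. repeat split; auto; lia. }
    destruct Hmin as [a [b [Hab [Hb [Ha [Hta Hta']]]]]].
    apply (sumN_lt _ _ _ a).
    - intros u Hu'. apply cnt_le. apply Hle; auto.
    - apply in_seq; lia.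
    - apply (cnt_lt _ _ _ b).
      + apply Hle. apply in_seq; lia.
      + apply in_seq; lia.
      + rewrite Hta'. apply andb_false_r.
      + rewrite Hta. apply Nat.ltb_lt in Hab. rewrite Hab. reflexivity. }
  assert (HK : (kk n tr' <= kk n tr)%nat).
  { unfold kk. apply cnt_le. intros x _ H. apply (unsat_mono n tr tr'); auto. }
  assert (Huw : unsat n tr w = true).
  { apply (unsat_true _ _ _ v); auto. rewrite Hs1; auto. }
  destruct (Fp_unsat n tr v Hu Hv) as [K0 [EK EF]]. rewrite EF.
  apply (le_INR (S (UU n tr'))) in HU. rewrite S_INR in HU.
  pose proof (pos_INR (n - 1)) as Hc.
  destruct (unsat n tr' w) eqn:Euw.
  - destruct (Fp_unsat n tr' w Euw Hw) as [K0' [EK' EF']]. rewrite EF'.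
    assert (Hs K0' <= Hs K0) by (apply Hs_mono; lia).
    assert (INR (n-1) * Hs K0' <= INR (n-1) * Hs K0) by (apply Rmult_le_compat_l; auto). lra.
  - assert (Hlt : (kk n tr' < kk n tr)%nat).
    { unfold kk. apply (cnt_lt _ _ _ w); auto.
      - intros x _ H. apply (unsat_mono n tr tr'); auto.
      - apply in_seq; lia. }
    unfold Fp. rewrite Euw.
    assert (Hs (kk n tr') <= Hs K0) by (apply Hs_mono; lia).
    assert (INR (n-1) * Hs (kk n tr') <= INR (n-1) * Hs K0) by (apply Rmult_le_compat_l; auto). lra.
Qed.

Definition ind n h : R := if all_covered n h then 0 else 1.
Definition Q n rule h t : R := sumR (seqs n t) (fun s => prob_from n rule h s * ind n (h ++ s)).
Fixpoint D n rule h T : R := match T with O => 0 | S T' => D n rule h T' + Q n rule h T' end.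

Lemma Q_0 n rule h : Q n rule h 0 = ind n h.
Proof. unfold Q, sumR. simpl. rewrite app_nil_r. ring. Qed.

Lemma Q_S n rule h t : Q n rule h (S t) =
  sumR (seq 0 n) (fun w => step_prob n rule h w * Q n rule (h ++ [w]) t).
Proof.
  unfold Q. simpl seqs. rewrite sumR_flat_map. apply sumR_ext. intros w _.
  rewrite sumR_map. rewrite <- sumR_scal. apply sumR_ext. intros s _.
  simpl prob_from. rewrite <- app_assoc. simpl. ring.
Qed.

Lemma D_S n rule h T : D n rule h (S T) =
  ind n h + sumR (seq 0 n) (fun w => step_prob n rule h w * D n rule (h ++ [w]) T).
Proof.
  revert h. induction T; intros h.
  - change (D n rule h 1) with (0 + Q n rule h 0). rewrite Q_0.
    rewrite (sumR_ext _ _ (fun w => 0 * 0)) by (intros; simpl; ring).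
    rewrite sumR_scal. ring.
  - change (D n rule h (S (S T))) with (D n rule h (S T) + Q n rule h (S T)).
    rewrite IHT, Q_S. rewrite Rplus_assoc, <- sumR_plus. f_equal. apply sumR_ext.
    intros w _. simpl. ring.
Qed.

Lemma cover_eq n rule v0 T : cover_tail_partial n rule v0 T = D n rule [v0] T.
Proof. induction T; simpl; auto. rewrite IHT. reflexivity. Qed.

Definition F n h : R := Fp n (traversed h) (last h 0%nat).

Lemma existsb_ext' {A} (f g : A -> bool) l :
  (forall x, In x l -> f x = g x) -> existsb f l = existsb g l.
Proof.
  induction l; simpl; intros H; auto. rewrite H by auto. rewrite IHl; auto.
Qed.

Lemma has_unused_unsat n h : (last h 0 < n)%nat ->
  has_unused n h = unsat n (traversed h) (last h 0%nat).
Proof.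
  intros Hv. unfold has_unused, unsat. apply existsb_ext'. intros w Hw.
  apply in_seq in Hw. unfold unused_nbr, last_vertex.
  apply Nat.ltb_lt in Hv. rewrite Hv. assert (Hw' : (w <? n) = true) by (apply Nat.ltb_lt; lia).
  rewrite Hw'. reflexivity.
Qed.

Lemma forallb_false {A} (f : A -> bool) l : forallb f l = false -> exists x, In x l /\ f x = false.
Proof.
  induction l; simpl; intros H; [discriminate|].
  destruct (f a) eqn:E; simpl in H.
  - destruct (IHl H) as [x [? ?]]. eauto.
  - eauto.
Qed.

Lemma uncovered_k n h : all_covered n h = false -> (0 < kk n (traversed h))%nat.
Proof.
  intros H. unfold all_covered in H.
  apply forallb_false in H. destruct H as [u [Hu H]].
  apply forallb_false in H. destruct H as [v [Hv H]].
  destruct (u <? v) eqn:E; simpl in H; [|discriminate].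
  apply Nat.ltb_lt in E. apply in_seq in Hv.
  unfold kk. apply (cnt_pos _ _ u); auto.
  apply (unsat_true _ _ _ v); auto; lia.
Qed.

Lemma F_nonneg n tr v : (v < n)%nat -> 0 <= Fp n tr v.
Proof.
  intros Hv. pose proof (pos_INR (n-1)).
  destruct (unsat n tr v) eqn:E.
  - destruct (Fp_unsat n tr v E Hv) as [K0 [_ ->]].
    pose proof (pos_INR (UU n tr)). pose proof (Hs_nonneg K0).
    pose proof (Rmult_le_pos _ _ H H1). lra.
  - unfold Fp. rewrite E. pose proof (pos_INR (UU n tr)). pose proof (Hs_nonneg (kk n tr)).
    pose proof (Rmult_le_pos _ _ H H1). lra.
Qed.

Lemma sp_nonneg n rule h w : (2 <= n)%nat -> valid_rule n rule -> 0 <= step_prob n rule h w.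
Proof.
  intros Hn Hr. unfold step_prob. destruct (has_unused n h) eqn:E.
  - destruct (unused_nbr n h w) eqn:E2; [|lra]. apply (proj1 (Hr h E)); auto.
  - destruct (_ && _); [|lra]. left. apply Rinv_0_lt_compat. apply lt_0_INR. lia.
Qed.

Lemma cnt_compl {A} (l : list A) p : (cnt l p + cnt l (fun x => negb (p x)) = length l)%nat.
Proof. unfold cnt; induction l; simpl; auto. destruct (p a); simpl; lia. Qed.

Lemma sumR_split_if {A} (l : list A) (p : A -> bool) f :
  sumR l (fun x => if p x then f x else 0) <= sumR l f \/ True.
Proof. right; auto. Qed.

Lemma unused_nbr_spec n h w : unused_nbr n h w = true ->
  (last h 0 < n)%nat /\ (w < n)%nat /\ last h 0%nat <> w /\ traversed h (last h 0%nat) w = false.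
Proof.
  unfold unused_nbr, last_vertex. intros H.
  apply andb_prop in H as [H H4]. apply andb_prop in H as [H H3]. apply andb_prop in H as [H1 H2].
  apply Nat.ltb_lt in H1. apply Nat.ltb_lt in H2. apply negb_true_iff in H3. apply negb_true_iff in H4.
  apply Nat.eqb_neq in H3. auto.
Qed.

Lemma F_greedy n h w : h <> [] -> unused_nbr n h w = true -> F n (h ++ [w]) + 1 <= F n h.
Proof.
  intros Hne Hu. destruct (unused_nbr_spec n h w Hu) as [Hv [Hw [Hvw Ht]]].
  unfold F. rewrite last_last.
  apply greedy_step with (v := last h 0%nat); auto.
  - intros a b Hab. rewrite trav_app by auto. rewrite Hab. reflexivity.
  - apply trav_sym.
  - intros a b. rewrite !trav_app by auto. rewrite trav_sym, edge_eqb_sym. reflexivity.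
  - rewrite trav_app by auto. rewrite edge_eqb_refl. apply orb_true_r.
  - apply (unsat_true _ _ _ w); auto.
Qed.

Lemma step_greedy n rule h : h <> [] -> valid_rule n rule -> has_unused n h = true ->
  sumR (seq 0 n) (fun w => step_prob n rule h w * F n (h ++ [w])) <= F n h - 1.
Proof.
  intros Hne Hr Hh. destruct (Hr h Hh) as [Hpos Hsum].
  apply Rle_trans with (sumR (seq 0 n) (fun w => (F n h - 1) * (if unused_nbr n h w then rule h w else 0))).
  - apply sumR_le. intros w _. unfold step_prob. rewrite Hh.
    destruct (unused_nbr n h w) eqn:E.
    + pose proof (F_greedy n h w Hne E). pose proof (Hpos w E).
      rewrite (Rmult_comm (F n h - 1)). apply Rmult_le_compat_l; auto. lra.
    + lra.
  - rewrite sumR_scal. unfold sumR. rewrite Hsum. lra.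
Qed.

Lemma step_random n rule h : h <> [] -> (2 <= n)%nat -> (last h 0 < n)%nat ->
  has_unused n h = false ->
  ind n h + sumR (seq 0 n) (fun w => step_prob n rule h w * F n (h ++ [w])) <= F n h.
Proof.
  intros Hne Hn Hv Hh.
  assert (Huv : unsat n (traversed h) (last h 0%nat) = false) by (rewrite <- has_unused_unsat; auto).
  set (v := last h 0%nat) in *. set (tr := traversed h) in *.
  assert (Hall : forall y, (y < n)%nat -> v <> y -> tr v y = true).
  { intros y Hy Hvy. unfold unsat in Huv.
    destruct (tr v y) eqn:E; auto.
    assert (existsb (fun y => negb (v =? y) && negb (tr v y)) (seq 0 n) = true).
    { apply existsb_exists. exists y. split; [apply in_seq; lia|].
      rewrite E. apply Nat.eqb_neq in Hvy. rewrite Hvy. reflexivity. }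
    congruence. }
  assert (Htr : forall w, (w < n)%nat -> v <> w -> traversed (h ++ [w]) = tr).
  { intros w Hw Hvw. apply functional_extensionality; intro a.
    apply functional_extensionality; intro b.
    rewrite trav_app by auto. fold v. fold tr.
    destruct (edge_eqb v w a b) eqn:E; [|apply orb_false_r].
    rewrite orb_true_r. symmetry.
    apply edge_eqb_true in E. destruct E as [[-> ->]|[-> ->]].
    - apply Hall; auto.
    - unfold tr. rewrite trav_sym. apply Hall; auto. }
  set (c := INR (n - 1)).
  assert (Hc : 0 < c) by (apply lt_0_INR; lia).
  set (K := kk n tr). set (A := INR (UU n tr) + c * Hs K).
  assert (HF : F n h = A) by (unfold F, Fp; fold v tr; rewrite Huv; unfold A, c, K; ring).
  assert (Hsum : sumR (seq 0 n) (fun w => step_prob n rule h w * F n (h ++ [w])) =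
     / c * (A * INR (cnt (seq 0 n) (fun w => negb (v =? w)))
            - c / INR K * INR (cnt (seq 0 n) (unsat n tr)))).
  { rewrite !INR_cnt.
    rewrite (sumR_ext _ _ (fun w => (/ c * A) * (if negb (v =? w) then 1 else 0)
        + (- (/ c * (c / INR K))) * (if unsat n tr w then 1 else 0))).
    - rewrite sumR_plus, !sumR_scal. ring.
    - intros w Hw. apply in_seq in Hw. unfold step_prob. rewrite Hh.
      unfold last_vertex. fold v.
      assert (Hw' : (w <? n) = true) by (apply Nat.ltb_lt; lia). rewrite Hw'. simpl andb.
      destruct (Nat.eqb_spec v w) as [<-|Hvw].
      + rewrite Huv. simpl. ring.
      + simpl negb. unfold F. rewrite last_last, Htr by (auto; lia).
        unfold Fp. fold K. fold c. destruct (unsat n tr w); unfold A; ring. }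
  assert (Hcnt : cnt (seq 0 n) (fun w => negb (v =? w)) = (n - 1)%nat).
  { pose proof (cnt_compl (seq 0 n) (Nat.eqb v)) as H1.
    rewrite cnt_eqb_nodup in H1 by (apply seq_NoDup || (apply in_seq; lia)).
    rewrite length_seq in H1. lia. }
  rewrite Hsum, Hcnt. fold c. change (cnt (seq 0 n) (unsat n tr)) with K. rewrite HF.
  destruct K as [|K0] eqn:EK.
  - unfold ind. destruct (all_covered n h) eqn:Ec.
    + replace (/ c * (A * c - c / INR 0 * INR 0)) with A by (simpl INR; rewrite Rmult_0_r, Rminus_0_r; field; lra). lra.
    + pose proof (uncovered_k n h Ec). fold tr in H. unfold K in EK. lia.
  - assert (0 < INR (S K0)) by (apply lt_0_INR; lia).
    assert (ind n h <= 1) by (unfold ind; destruct (all_covered n h); lra).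
    replace (/ c * (A * c - c / INR (S K0) * INR (S K0))) with (A - 1) by (field; lra). lra.
Qed.

Lemma step_ineq n rule h : h <> [] -> (2 <= n)%nat -> (last h 0 < n)%nat -> valid_rule n rule ->
  ind n h + sumR (seq 0 n) (fun w => step_prob n rule h w * F n (h ++ [w])) <= F n h.
Proof.
  intros Hne Hn Hv Hr. destruct (has_unused n h) eqn:E.
  - pose proof (step_greedy n rule h Hne Hr E).
    assert (ind n h <= 1) by (unfold ind; destruct (all_covered n h); lra). lra.
  - apply step_random; auto.
Qed.

Lemma D_bound n rule T : (2 <= n)%nat -> valid_rule n rule ->
  forall h, h <> [] -> (last h 0 < n)%nat -> D n rule h T <= F n h.
Proof.
  intros Hn Hr. induction T; intros h Hne Hv.
  - simpl. apply F_nonneg; auto.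
  - rewrite D_S. eapply Rle_trans; [|apply (step_ineq n rule h); auto].
    apply Rplus_le_compat_l. apply sumR_le. intros w Hw. apply in_seq in Hw.
    apply Rmult_le_compat_l; [apply sp_nonneg; auto|].
    apply IHT.
    + intro H. apply app_eq_nil in H. destruct H; discriminate.
    + rewrite last_last. lia.
Qed.

Lemma sumN_ext {A} (l : list A) f g : (forall x, In x l -> f x = g x) -> sumN l f = sumN l g.
Proof. unfold sumN; induction l; simpl; intros H; [reflexivity|]. f_equal; auto. Qed.
Lemma sumN_plus {A} (l : list A) f g : sumN l (fun x => (f x + g x)%nat) = (sumN l f + sumN l g)%nat.
Proof. unfold sumN; induction l; simpl; auto. rewrite IHl. lia. Qed.
Lemma sumN_seqS n f : sumN (seq 0 (S n)) f = (sumN (seq 0 n) f + f n)%nat.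
Proof. unfold sumN. rewrite seq_S, map_app, fold_right_app. simpl.
  induction (map f (seq 0 n)); simpl; lia. Qed.
Lemma cnt_seqS n p : cnt (seq 0 (S n)) p = (cnt (seq 0 n) p + (if p n then 1 else 0))%nat.
Proof. unfold cnt. rewrite seq_S, filter_app, length_app. simpl. destruct (p n); simpl; lia. Qed.

Lemma pairs_count n : (2 * sumN (seq 0 n) (fun u => cnt (seq 0 n) (fun v => u <? v)) = n * (n - 1))%nat.
Proof.
  induction n; [reflexivity|].
  rewrite (sumN_ext _ _ (fun u => (cnt (seq 0 n) (fun v => u <? v) + (if u <? n then 1%nat else 0%nat))%nat))
    by (intros; apply cnt_seqS).
  rewrite sumN_plus, !sumN_seqS.
  assert (E1 : cnt (seq 0 n) (fun v => n <? v) = 0%nat).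
  { assert (forall m, (m <= n)%nat -> cnt (seq 0 m) (fun v => n <? v) = 0%nat).
    { induction m; intros; [reflexivity|]. rewrite cnt_seqS, IHm by lia.
      destruct (Nat.ltb_spec n m); lia. }
    auto. }
  assert (E2 : sumN (seq 0 n) (fun u => if u <? n then 1%nat else 0%nat) = n).
  { rewrite (sumN_ext _ _ (fun _ => 1%nat)).
    - clear. induction n; [reflexivity|]. rewrite sumN_seqS, IHn. lia.
    - intros x Hx. apply in_seq in Hx. destruct (Nat.ltb_spec x n); lia. }
  rewrite E1, E2, Nat.ltb_irrefl. destruct n; simpl in *; lia.
Qed.

Lemma ln_le_xm1 x : 0 < x -> ln x <= x - 1.
Proof. intros Hx. pose proof (exp_ineq1_le (ln x)). rewrite exp_ln in H by auto. lra. Qed.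

Lemma Hs_ln m : (1 <= m)%nat -> Hs m <= 1 + ln (INR m).
Proof.
  induction 1.
  - simpl. rewrite ln_1. lra.
  - change (Hs (S m)) with (Hs m + / INR (S m)).
    assert (Hm : 0 < INR m) by (apply lt_0_INR; lia).
    assert (HS : 0 < INR (S m)) by (apply lt_0_INR; lia).
    pose proof (ln_le_xm1 (INR m / INR (S m)) ltac:(apply Rdiv_lt_0_compat; auto)) as H1.
    unfold Rdiv in H1. rewrite ln_mult, ln_Rinv in H1 by (auto; apply Rinv_0_lt_compat; auto).
    replace (INR m * / INR (S m) - 1) with (- / INR (S m)) in H1
      by (rewrite S_INR in *; field; lra).
    lra.
Qed.

Lemma F_start n v0 : (2 <= n)%nat -> (v0 < n)%nat ->
  F n [v0] <= num_edges n + INR (n - 1) * Hs (n - 1).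
Proof.
  intros Hn Hv. unfold F.
  assert (Htr : traversed [v0] = fun _ _ => false) by reflexivity.
  rewrite Htr. simpl last.
  assert (Hu : unsat n (fun _ _ => false) v0 = true).
  { apply (unsat_true _ _ _ (if v0 =? 0 then 1 else 0)%nat); auto.
    - destruct (v0 =? 0); lia.
    - destruct (Nat.eqb_spec v0 0); lia. }
  destruct (Fp_unsat _ _ _ Hu Hv) as [K0 [EK ->]].
  assert (HK : (S K0 <= n)%nat).
  { rewrite <- EK. unfold kk. pose proof (cnt_le_length (seq 0 n) (unsat n (fun _ _ => false))).
    rewrite length_seq in H. auto. }
  assert (HU : INR (UU n (fun _ _ => false)) = num_edges n).
  { unfold UU, num_edges.
    assert (E : (fun u => cnt (seq 0 n) (fun v => (u <? v) && negb false)) =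
                (fun u => cnt (seq 0 n) (fun v => u <? v))).
    { apply functional_extensionality. intros u. f_equal. apply functional_extensionality.
      intros v. apply andb_true_r. }
    rewrite E. pose proof (pairs_count n) as P.
    apply (f_equal INR) in P. rewrite mult_INR, mult_INR in P. simpl (INR 2) in P. lra. }
  rewrite HU.
  pose proof (Hs_mono K0 (n - 1) ltac:(lia)). pose proof (pos_INR (n-1)).
  pose proof (Rmult_le_compat_l _ _ _ H0 H). lra.
Qed.

Lemma ln_ge0 x : 1 <= x -> 0 <= ln x.
Proof.
  intros Hx. pose proof (ln_le_xm1 (/ x) ltac:(apply Rinv_0_lt_compat; lra)).
  rewrite ln_Rinv in H by lra.
  assert (/ x <= 1). { rewrite <- Rinv_1. apply Rinv_le_contravar; lra. }
  lra.
Qed.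

Theorem mainTheorem3 :
  forall eps : R, 0 < eps ->
  exists N : nat, forall n : nat, (N <= n)%nat ->
  forall rule : list nat -> nat -> R, valid_rule n rule ->
  forall v0 : nat, (v0 < n)%nat ->
  forall T : nat,
    cover_tail_partial n rule v0 T <= num_edges n + (1 + eps) * (INR n * ln (INR n)).
Proof.
  intros eps Heps.
  set (z := up (exp (/ eps))).
  exists (Nat.max 2 (Z.to_nat z)).
  intros n Hn rule Hr v0 Hv T.
  assert (Hn2 : (2 <= n)%nat) by lia.
  rewrite cover_eq.
  apply Rle_trans with (F n [v0]).
  { apply D_bound; auto; try discriminate. }
  eapply Rle_trans; [apply F_start; auto|].
  apply Rplus_le_compat_l.
  assert (Hz : IZR z > exp (/ eps)) by (apply archimed).
  assert (Hz0 : (0 <= z)%Z).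
  { apply le_IZR. pose proof (exp_pos (/ eps)). lra. }
  assert (HnZ : IZR z <= INR n).
  { rewrite <- (Z2Nat.id z Hz0). rewrite <- INR_IZR_INZ. apply le_INR. lia. }
  assert (Hlnn : / eps <= ln (INR n)).
  { rewrite <- (ln_exp (/ eps)). left. apply ln_increasing; [apply exp_pos|lra]. }
  assert (Hel : 1 <= eps * ln (INR n)).
  { replace 1 with (eps * / eps) by (field; lra). apply Rmult_le_compat_l; lra. }
  assert (HnR : 2 <= INR n) by (change 2 with (INR 2); apply le_INR; auto).
  assert (Hm1 : INR (n - 1) = INR n - 1) by (rewrite minus_INR by lia; reflexivity).
  pose proof (Hs_ln (n - 1) ltac:(lia)) as HH.
  assert (Hl1 : 0 <= ln (INR (n - 1))) by (apply ln_ge0; rewrite Hm1; lra).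
  assert (Hl2 : ln (INR (n - 1)) <= ln (INR n)) by (left; apply ln_increasing; rewrite Hm1; lra).
  apply Rle_trans with (INR (n - 1) * (1 + ln (INR (n - 1)))).
  { apply Rmult_le_compat_l; auto. apply pos_INR. }
  apply Rle_trans with (INR n * (1 + ln (INR n))).
  { apply Rmult_le_compat; try lra; try apply pos_INR; rewrite Hm1; lra. }
  assert (INR n <= INR n * (eps * ln (INR n))).
  { rewrite <- (Rmult_1_r (INR n)) at 1. apply Rmult_le_compat_l; lra. }
  nra.
Qed.
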